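(* Decompose the relative BRST operator as $\hat Q=\eta_0\,\mathcal X+\hat d$, where $\mathcal X=\beta_0+\sum_{n\neq0} n\,c_n\zeta_{-n}$ and $\hat d$ contains no $\eta_0$ (nor $\zeta_0$). Let $\mathcal P=\gamma_0$, so $[\mathcal X,\mathcal P]=1$. Define the tilded oscillators $\tilde b_n=b_n+n\zeta_n\gamma_0$ and $\tilde\eta_n=\eta_n+n c_n\gamma_0$ ($n\neq0$). Then the oscillators $\tilde b_n, c_n,\zeta_n,\tilde\eta_n,\beta_n,\gamma_n$ ($n\ne0$) satisfy the same (anti)commutation relations as the untilded ones and all commute with $\mathcal X$ and $\mathcal P$, and $\hat d$ commutes with both $\mathcal X$ and $\mathcal P$; i.e. when written in terms of the tilded oscillators (together with $x_n,\varphi_n$, $n\ne 0$, and the momenta), $\hat d$ is independent of $\mathcal X$ and $\mathcal P$.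
   Context: Same Fock space and BRST operator as follows. Fields/modes: $x_n$, $\varphi_n$ with $[x_m,x_n]=[\varphi_m,\varphi_n]=m\delta_{m+n,0}$; fermionic $b_n,c_n$ with $\{b_m,c_n\}=\delta_{m+n,0}$; fermionic $\zeta_n,\eta_n$ with $\{\zeta_m,\eta_n\}=\delta_{m+n,0}$; bosonic $\beta_n,\gamma_n$ with $[\gamma_m,\beta_n]=\delta_{m+n,0}$. $Q_B=\sum_m :c_{-m}(L^{matt}_m+L^{grav}_m+\tfrac12L^{bc}_m+L^{\zeta\eta}_m)+\eta_{-m}\beta_m:$ with $L^{matt}_n=\tfrac12\sum_m:x_mx_{n-m}:$, $L^{grav}_n=\sum_m:(-m\beta_m\gamma_{n-m}+\tfrac12\varphi_m\varphi_{n-m}):+\sqrt2 i(n+1)\varphi_n$, $L^{bc}_n=\sum_m(2n-m):b_mc_{n-m}:$, $L^{\zeta\eta}_n=-\sum_m m:\zeta_m\eta_{n-m}:$. One writes $Q_B=c_0L_0-b_0\sum_{n\ne0}n c_{-n}c_n+\hat Q$ with $\hat Q$ free of $b_0,c_0$. Explicitly $\hat d=\sum_{n\ne0}:c_{-n}(L^{matt}_n+L^{grav}_n+L'^{\zeta\eta}_n):+\sum_{n\ne0}\eta_{-n}\beta_n-\tfrac12\sum_{m,n\ne0,\,m+n\ne0}(m-n):c_{-m}c_{-n}b_{n+m}:$, where $L'^{\zeta\eta}_n$ is $L^{\zeta\eta}_n$ with the term containing $\eta_0$ removed. *)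

(* Defs.v *)
From HB Require Import structures.
From mathcomp Require Import all_boot all_order all_algebra.
From mathcomp Require Import boolp classical_sets functions cardinality fsbigop.
Set Implicit Arguments. Unset Strict Implicit. Unset Printing Implicit Defensive.
Import Order.TTheory GRing.Theory Num.Theory.
Local Open Scope classical_set_scope.
Local Open Scope ring_scope.

Inductive mode := MX | MPhi | Mb | Mc | Mzeta | Meta | Mbeta | Mgamma.

Definition odd_mode (k : mode) : bool :=
  match k with Mb | Mc | Mzeta | Meta => true | _ => false end.

Section Brackets.
Variables (C : numClosedFieldType) (V : lmodType C).

Definition comm (A B : V -> V) : V -> V := fun v => A (B v) - B (A v).
Definition acomm (A B : V -> V) : V -> V := fun v => A (B v) + B (A v).

Definition gbracket (k l : mode) (A B : V -> V) : V -> V :=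
  if odd_mode k && odd_mode l then acomm A B else comm A B.

Definition kdelta (m n : int) : C := if m + n == 0 then 1 else 0.

Definition bracket_val (k l : mode) (m n : int) : C :=
  match k, l with
  | MX, MX => m%:~R * kdelta m n
  | MPhi, MPhi => m%:~R * kdelta m n
  | Mb, Mc | Mc, Mb => kdelta m n
  | Mzeta, Meta | Meta, Mzeta => kdelta m n
  | Mgamma, Mbeta => kdelta m n
  | Mbeta, Mgamma => - kdelta m n
  | _, _ => 0
  end.

(* A representation of the mode algebra by linear operators on V,
   of positive energy (every vector is killed by all modes of large index),
   as is the case for the Fock space. *)
Record mode_rep := ModeRep {
  op : mode -> int -> {linear V -> V};
  op_bracket : forall (k l : mode) (m n : int),
      gbracket k l (op k m) (op l n) = (fun v => bracket_val k l m n *: v);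
  op_pos_energy : forall v : V, exists N : int,
      forall (k : mode) (n : int), N < n -> op k n v = 0
}.

Variable M : mode_rep.

Local Notation x n := (op M MX n).
Local Notation ph n := (op M MPhi n).
Local Notation b n := (op M Mb n).
Local Notation c n := (op M Mc n).
Local Notation ze n := (op M Mzeta n).
Local Notation et n := (op M Meta n).
Local Notation be n := (op M Mbeta n).
Local Notation ga n := (op M Mgamma n).

Definition nonzero_ints : set int := [set n : int | n != 0].

Definition Lmatt (n : int) (v : V) : V :=
  2^-1 *: \sum_(m \in [set: int]) x m (x (n - m) v).

Definition Lgrav (n : int) (v : V) : V :=
  \sum_(m \in [set: int]) ((- m%:~R) *: be m (ga (n - m) v)
                           + 2^-1 *: ph m (ph (n - m) v))
  + (sqrtC 2 * 'i * (n + 1)%:~R) *: ph n v.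

(* L'^{zeta eta}_n = - sum_{m <> n} m zeta_m eta_{n-m}  (eta_0 term removed) *)
Definition Lzeta' (n : int) (v : V) : V :=
  - \sum_(m \in [set m : int | m != n]) m%:~R *: ze m (et (n - m) v).

(* For n <> 0 all normal orderings in dhat are trivial (the modes involved
   (anti)commute), so the normal-ordered products are plain products. *)
Definition dhat (v : V) : V :=
  \sum_(n \in nonzero_ints) c (- n) (Lmatt n v + Lgrav n v + Lzeta' n v)
  + \sum_(n \in nonzero_ints) et (- n) (be n v)
  - 2^-1 *: \sum_(m \in nonzero_ints)
        \sum_(n \in [set n : int | (n != 0) && (m + n != 0)])
          (m - n)%:~R *: c (- m) (c (- n) (b (n + m) v)).

Definition Xop (v : V) : V :=
  be 0 v + \sum_(n \in nonzero_ints) n%:~R *: c n (ze (- n) v).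

Definition Pop (v : V) : V := ga 0 v.

Definition btilde (n : int) (v : V) : V := b n v + n%:~R *: ze n (ga 0 v).
Definition etatilde (n : int) (v : V) : V := et n v + n%:~R *: c n (ga 0 v).

Definition optilde (k : mode) (n : int) : V -> V :=
  match k with
  | Mb => btilde n
  | Meta => etatilde n
  | _ => op M k n
  end.

End Brackets.

(* Main.v *)
Require Import Defs.
From HB Require Import structures.
From mathcomp Require Import all_boot all_order all_algebra.
From mathcomp Require Import boolp classical_sets functions cardinality fsbigop.
From mathcomp Require Import zify ring.
Set Implicit Arguments. Unset Strict Implicit. Unset Printing Implicit Defensive.
Import Order.TTheory GRing.Theory Num.Theory.
Local Open Scope classical_set_scope.
Local Open Scope ring_scope.

Section Gen.
Variables (C : numClosedFieldType) (V : lmodType C).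

Definition win (K : nat) : seq int := [seq (i%:Z - K%:Z) | i <- iota 0 (K.*2.+1)].

Lemma win_uniq K : uniq (win K).
Proof.
rewrite map_inj_uniq ?iota_uniq // => i j H. lia.
Qed.

Lemma mem_win K (i : int) : - K%:Z <= i <= K%:Z -> i \in win K.
Proof.
move=> H; apply/mapP; exists (absz (i + K%:Z)); first by rewrite mem_iota; lia.
lia.
Qed.

Definition bndK (A : set int) (f : int -> V) (K : nat) :=
  forall i, A i -> (K%:Z < i) || (i < - K%:Z) -> f i = 0.
Definition bnd (A : set int) (f : int -> V) := exists K, bndK A f K.

Lemma bndK_le A f K K' : (K <= K')%N -> bndK A f K -> bndK A f K'.
Proof. move=> le H i Ai Hi; apply: H => //; lia. Qed.

Lemma fs_win (A : set int) (f : int -> V) (K : nat) : bndK A f K ->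
  \sum_(i \in A) f i = \sum_(i <- win K | `[< A i >]) f i.
Proof.
move=> H; rewrite [RHS]bigfs ?win_uniq //.
  apply: eq_fsbigl; apply/seteqP; split => x /=; by rewrite asboolE.
move=> i /asboolP Ai Hi; apply: H => //.
case: (boolP ((K%:Z < i) || (i < - K%:Z))) => // /negP Hn.
by move: Hi; rewrite mem_win //; lia.
Qed.

Definition lin (g : V -> V) := forall a u w, g (a *: u + w) = a *: g u + g w.

Lemma lin0 g : lin g -> g 0 = 0.
Proof. by move=> H; have := H (-1) 0 0; rewrite scaler0 addr0 scaleN1r addNr. Qed.
Lemma linD g : lin g -> forall u w, g (u + w) = g u + g w.
Proof. by move=> H u w; have := H 1 u w; rewrite !scale1r. Qed.
Lemma linZ g : lin g -> forall a u, g (a *: u) = a *: g u.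
Proof. by move=> H a u; have := H a u 0; rewrite addr0 (lin0 H) addr0. Qed.
Lemma linN g : lin g -> forall u, g (- u) = - g u.
Proof. by move=> H u; rewrite -scaleN1r linZ // scaleN1r. Qed.
Lemma linB g : lin g -> forall u w, g (u - w) = g u - g w.
Proof. by move=> H u w; rewrite linD // linN. Qed.

Lemma lin_big g (I : Type) (r : seq I) (P : pred I) (F : I -> V) : lin g ->
  g (\sum_(i <- r | P i) F i) = \sum_(i <- r | P i) g (F i).
Proof. by move=> H; apply: (big_morph g (linD H) (lin0 H)). Qed.

Lemma bnd_comp g A f : lin g -> bndK A f =1 bndK A (g \o f) \/ True.
Proof. by right. Qed.

Lemma bndK_lin g A f K : lin g -> bndK A f K -> bndK A (fun i => g (f i)) K.
Proof. by move=> H Hf i Ai Hi; rewrite Hf // lin0. Qed.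

Lemma fs_lin g A f : lin g -> bnd A f ->
  g (\sum_(i \in A) f i) = \sum_(i \in A) g (f i).
Proof.
move=> H [K HK]; rewrite (fs_win HK) (fs_win (bndK_lin H HK)); exact: lin_big.
Qed.

Lemma bndD A f g : bnd A f -> bnd A g -> bnd A (fun i => f i + g i).
Proof.
move=> [K HK] [L HL]; exists (maxn K L) => i Ai Hi.
rewrite (bndK_le (leq_maxl K L) HK) ?(bndK_le (leq_maxr K L) HL) ?addr0 //.
Qed.

Lemma fsumD A f g : bnd A f -> bnd A g ->
  \sum_(i \in A) (f i + g i) = \sum_(i \in A) f i + \sum_(i \in A) g i.
Proof.
move=> [K HK] [L HL].
have HK' := bndK_le (leq_maxl K L) HK; have HL' := bndK_le (leq_maxr K L) HL.
have HS : bndK A (fun i => f i + g i) (maxn K L) by move=> i Ai Hi; rewrite HK' ?HL' ?addr0.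
by rewrite (fs_win HK') (fs_win HL') (fs_win HS) big_split.
Qed.

Lemma linS a : lin (fun u : V => a *: u).
Proof. by move=> b u w; rewrite scalerDr !scalerA mulrC. Qed.
Lemma linNeg : lin (fun u : V => - u).
Proof. by move=> b u w; rewrite opprD scalerN. Qed.

Lemma bndZ A f (a : C) : bnd A f -> bnd A (fun i => a *: f i).
Proof. by move=> [K HK]; exists K; apply: (bndK_lin (linS a)). Qed.
Lemma bndN A f : bnd A f -> bnd A (fun i => - f i).
Proof. by move=> [K HK]; exists K; apply: (bndK_lin linNeg). Qed.

Lemma fsumZ A f a : bnd A f -> \sum_(i \in A) a *: f i = a *: \sum_(i \in A) f i.
Proof. by move=> H; rewrite (fs_lin (linS a)). Qed.
Lemma fsumN A f : bnd A f -> \sum_(i \in A) - f i = - \sum_(i \in A) f i.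
Proof. by move=> H; rewrite (fs_lin linNeg). Qed.
Lemma fsumB A f g : bnd A f -> bnd A g ->
  \sum_(i \in A) (f i - g i) = \sum_(i \in A) f i - \sum_(i \in A) g i.
Proof. by move=> Hf Hg; rewrite fsumD ?fsumN //; apply: bndN. Qed.

Lemma fsum0 A (f : int -> V) : (forall i, A i -> f i = 0) -> \sum_(i \in A) f i = 0.
Proof. exact: fsbig1. Qed.

Lemma fs_single (A : set int) (f : int -> V) a : A a ->
  (forall i, A i -> i != a -> f i = 0) -> \sum_(i \in A) f i = f a.
Proof.
move=> Aa H; rewrite -(fsbig_widen [set a] A f); first by rewrite fsbig_set1.
  by move=> x ->.
move=> x [Ax /= Hx]; apply: H => //; exact/eqP.
Qed.

Definition comm' := @comm C V.

Lemma h3 (s a : C) (P Q R : V) : (s *: P + Q) + a *: (s *: R) - s *: (P + a *: R) = Q.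
Proof.
rewrite scalerDr !scalerA [s * a]mulrC opprD.
by rewrite addrAC [s *: P + Q]addrC -!addrA addrC addNr addr0 subrr add0r.
Qed.

Lemma h3' (s a : C) (P Q R : V) : (s *: P + Q) + a *: (s *: R) = s *: (P + a *: R) + Q.
Proof. by rewrite scalerDr !scalerA [s * a]mulrC addrAC. Qed.

Lemma alg4 (A B G : V) (a b c : C) :
  - A + a *: G + c *: (- B + b *: G) = - (A + c *: B) + (a + c * b) *: G.
Proof. by rewrite scalerDr scalerN scalerA scalerDl opprD addrACA. Qed.

Lemma lin_add f g : lin f -> lin g -> lin (fun u => f u + g u).
Proof. by move=> Hf Hg a u w; rewrite Hf Hg scalerDr addrACA. Qed.
Lemma lin_sc f a : lin f -> lin (fun u => a *: f u).
Proof. by move=> Hf b u w; rewrite Hf scalerDr !scalerA mulrC. Qed.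
Lemma lin_o f g : lin f -> lin g -> lin (fun u => f (g u)).
Proof. by move=> Hf Hg a u w; rewrite Hg Hf. Qed.


Lemma h1 (a b c d : V) : (a + b) + c - (a + d) = b + (c - d).
Proof. by rewrite opprD addrACA [a + b]addrC addrK. Qed.

Lemma h2 (s t a b : C) (P Q R : V) : s * t = 1 ->
  s *: (t *: P + a *: Q) + b *: R - P = (s * a) *: Q + b *: R.
Proof. by move=> H; rewrite scalerDr !scalerA H scale1r addrAC [P + _]addrC addrK. Qed.


Lemma comm_sum A (F : int -> V -> V) (G : V -> V) w : lin G ->
  (forall u, bnd A (fun i => F i u)) ->
  comm (fun u => \sum_(i \in A) F i u) G w = \sum_(i \in A) comm (F i) G w.
Proof.
move=> HG HF; rewrite /comm (fs_lin HG) // fsumB //.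
by have [K HK] := HF w; exists K; apply: bndK_lin.
Qed.

Lemma comm_o f g G w : lin f -> comm (fun u => f (g u)) G w = f (comm g G w) + comm f G (g w).
Proof. by move=> Hf; rewrite /comm (linB Hf) addrA subrK. Qed.
Lemma comm_add f g G w : lin G -> comm (fun u => f u + g u) G w = comm f G w + comm g G w.
Proof. move=> HG; rewrite /comm linD //. rewrite opprD !addrA; congr (_ + _); rewrite addrAC. done. Qed.
Lemma comm_opp f G w : lin G -> comm (fun u => - f u) G w = - comm f G w.
Proof. by move=> HG; rewrite /comm (linN HG) opprK opprB addrC. Qed.
Lemma comm_scale f a G w : lin G -> comm (fun u => a *: f u) G w = a *: comm f G w.
Proof. by move=> HG; rewrite /comm linZ // scalerBr. Qed.

End Gen.

Section Modes.
Variables (C : numClosedFieldType) (V : lmodType C) (M : mode_rep V).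
Local Notation op := (op M).
Local Notation bv := (bracket_val C).
Local Notation X := (Xop M).
Local Notation nz := nonzero_ints.

Definition sg (k l : mode) : C := if odd_mode k && odd_mode l then -1 else 1.

Lemma swap k l m n v : op k m (op l n v) = sg k l *: op l n (op k m v) + bv k l m n *: v.
Proof.
have := congr1 (fun f => f v) (op_bracket M k l m n).
rewrite /gbracket /sg /comm /acomm; case: ifP => _ /= <-.
  by rewrite scaleN1r addrCA addNr addr0.
by rewrite scale1r addrC subrK.
Qed.

Lemma linop k n : lin (op k n).
Proof. by move=> a u w; rewrite linearP. Qed.

Lemma pe v : exists K : nat, forall k n, K%:Z < n -> op k n v = 0.
Proof.
have [N HN] := op_pos_energy M v; exists (absz N) => k n Hn; apply: HN; lia.
Qed.

Lemma kd0 m n : m + n != 0 -> kdelta C m n = 0.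
Proof. by rewrite /kdelta => /negbTE ->. Qed.

Lemma kill k l m n v : bv k l m n = 0 -> op k m v = 0 -> op k m (op l n v) = 0.
Proof. by move=> Hb Hv; rewrite swap Hv linear0 scaler0 Hb scale0r addr0. Qed.

Lemma kill2 k l1 l2 m n1 n2 v : bv k l1 m n1 = 0 -> bv k l2 m n2 = 0 -> op k m v = 0 ->
  op k m (op l1 n1 (op l2 n2 v)) = 0.
Proof. by move=> H1 H2 Hv; rewrite swap (kill H2 Hv) linear0 scaler0 H1 scale0r addr0. Qed.

Lemma bndY v : bnd nz (fun n => n%:~R *: op Mc n (op Mzeta (-n) v)).
Proof.
have [K HK] := pe v; exists K => n _ /orP[Hn|Hn].
  by rewrite (@kill Mc Mzeta) ?scaler0 // HK.
by rewrite (HK Mzeta (-n)) ?linear0 ?scaler0 //; lia.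
Qed.

Lemma XE v : X v = op Mbeta 0 v + \sum_(n \in nz) n%:~R *: op Mc n (op Mzeta (-n) v).
Proof. by []. Qed.

Lemma linX : lin X.
Proof.
move=> a u w; rewrite !XE linearP.
under eq_fsbigr => n _ do rewrite linearP linearP scalerDr scalerA mulrC -scalerA.
rewrite fsumD ?fsumZ; [|exact: bndY|exact/bndZ/bndY|exact: bndY].
by rewrite scalerDr -!addrA; congr (_ + _); rewrite addrCA.
Qed.

Lemma commX k j w : comm (op k j) X w = bv k Mbeta j 0 *: w +
  \sum_(n \in nz) n%:~R *: ((sg k Mc * bv k Mzeta j (-n)) *: op Mc n w + bv k Mc j n *: op Mzeta (-n) w).
Proof.
rewrite /comm !XE linearD (fs_lin (linop k j) (bndY w)) swap.
have -> : sg k Mbeta = 1 by case: k.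
rewrite scale1r h1 -fsumB; last exact: bndY.
  congr (_ + _); apply: eq_fsbigr => n _.
  rewrite linearZ /= -scalerBr; congr (_ *: _).
  rewrite (swap k Mc) (swap k Mzeta) linearD !linearZ /=; apply: h2.
  by case: k; rewrite /sg /= ?mulrNN mulr1.
have [K HK] := bndY w; exists K; apply: bndK_lin => //; exact: linop.
Qed.

Definition cXv k j w : V := match k with
  | Mb => - j%:~R *: op Mzeta j w
  | Meta => - j%:~R *: op Mc j w
  | Mgamma => kdelta C j 0 *: w
  | _ => 0 end.

Lemma cX k j w : comm (op k j) X w = cXv k j w.
Proof.
rewrite commX; case: k => /=;
  try by (rewrite scale0r add0r fsum0 // => n _; rewrite mulr0 !scale0r addr0 scaler0).
- rewrite scale0r add0r; have [->|j0] := eqVneq j 0.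
    rewrite fsum0 ?scaleN1r ?oppr0 ?scale0r //= => n n0.
    by rewrite mulr0 scale0r kd0 ?scale0r ?addr0 ?scaler0 //; rewrite add0r.
  rewrite (fs_single (a := - j)) /=.
  + by rewrite mulr0 scale0r add0r /kdelta subrr eqxx scale1r opprK rmorphN.
  + by rewrite /nonzero_ints /= oppr_eq0.
  + move=> n _ nj; rewrite mulr0 scale0r add0r kd0 ?scale0r ?scaler0 //.
    by apply: contra nj; rewrite addrC addr_eq0.
- rewrite scale0r add0r; have [->|j0] := eqVneq j 0.
    rewrite fsum0 ?oppr0 ?scale0r //= => n n0.
    by rewrite kd0 ?mulr0 ?scale0r ?addr0 ?scaler0 // add0r oppr_eq0.
  rewrite (fs_single (a := j)) /=.
  + by rewrite /kdelta subrr eqxx mulr1 scale0r addr0 scalerA mulrN1 scaleNr.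
  + by rewrite /nonzero_ints /=.
  + move=> n _ nj; rewrite kd0 ?mulr0 ?scale0r ?addr0 ?scaler0 //.
    by rewrite subr_eq0 eq_sym.
- by rewrite fsum0 ?addr0 // => n _; rewrite mulr0 !scale0r addr0 scaler0.
Qed.

Lemma cP k j w : comm (op k j) (Pop M) w = bv k Mgamma j 0 *: w.
Proof.
rewrite /comm /Pop swap; have -> : sg k Mgamma = 1 by case: k.
by rewrite scale1r addrAC subrr add0r.
Qed.


Lemma gbE k l (A B : V -> V) v : gbracket k l A B v = A (B v) - sg k l *: B (A v).
Proof.
by rewrite /gbracket /sg; case: ifP => _; rewrite /acomm /comm ?scaleN1r ?opprK ?scale1r.
Qed.

Local Notation bt := (btilde M).
Local Notation et := (etatilde M).

Lemma lin_bt m : lin (bt m).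
Proof. apply: lin_add; [exact: linop| apply: lin_sc; apply: lin_o; exact: linop]. Qed.
Lemma lin_et m : lin (et m).
Proof. apply: lin_add; [exact: linop| apply: lin_sc; apply: lin_o; exact: linop]. Qed.

Lemma sgg l : sg Mgamma l = 1. Proof. by case: l. Qed.
Lemma sgg' l : sg l Mgamma = 1. Proof. by case: l. Qed.

Lemma TPb l m n v : bv Mgamma l 0 n = 0 -> bv Mzeta l m n = 0 ->
  bt m (op l n v) = sg Mb l *: op l n (bt m v) + bv Mb l m n *: v.
Proof.
move=> Hg Hz; rewrite /btilde.
rewrite (swap Mgamma l 0 n) Hg scale0r addr0 sgg scale1r (swap Mzeta l m n) Hz scale0r addr0.
rewrite (swap Mb l m n) (linD (linop l n)) (linZ (linop l n)); exact: h3'.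
Qed.

Lemma TPe l m n v : bv Mgamma l 0 n = 0 -> bv Mc l m n = 0 ->
  et m (op l n v) = sg Meta l *: op l n (et m v) + bv Meta l m n *: v.
Proof.
move=> Hg Hz; rewrite /etatilde.
rewrite (swap Mgamma l 0 n) Hg scale0r addr0 sgg scale1r (swap Mc l m n) Hz scale0r addr0.
rewrite (swap Meta l m n) (linD (linop l n)) (linZ (linop l n)); exact: h3'.
Qed.

Lemma PTb k m n v : bv k Mgamma m 0 = 0 -> bv k Mzeta m n = 0 ->
  op k m (bt n v) = sg k Mb *: bt n (op k m v) + bv k Mb m n *: v.
Proof.
move=> Hg Hz; rewrite /btilde.
rewrite (linD (linop k m)) (linZ (linop k m)) (swap k Mzeta m n) Hz scale0r addr0.
rewrite (swap k Mgamma m 0) Hg scale0r addr0 sgg' scale1r (swap k Mb m n).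
exact: h3'.
Qed.

Lemma PTe k m n v : bv k Mgamma m 0 = 0 -> bv k Mc m n = 0 ->
  op k m (et n v) = sg k Meta *: et n (op k m v) + bv k Meta m n *: v.
Proof.
move=> Hg Hz; rewrite /etatilde.
rewrite (linD (linop k m)) (linZ (linop k m)) (swap k Mc m n) Hz scale0r addr0.
rewrite (swap k Mgamma m 0) Hg scale0r addr0 sgg' scale1r (swap k Meta m n).
exact: h3'.
Qed.
Lemma TTbb m n v : bt m (bt n v) = - bt n (bt m v).
Proof.
rewrite [bt n v]/btilde (linD (lin_bt m)) (linZ (lin_bt m)) (@TPb Mb) // (@TPb Mzeta) //.
rewrite (@TPb Mgamma) //= !scale0r !addr0 scale1r !scaleN1r scalerN -opprD.
by [].
Qed.

Lemma bt_eta m n v : bt m (op Meta n v) = - op Meta n (bt m v) + (m%:~R * kdelta C m n) *: op Mgamma 0 v.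
Proof.
rewrite /btilde (swap Mb Meta m n) (swap Mgamma Meta 0 n) sgg scale1r /= !scale0r !addr0 (swap Mzeta Meta m n) /=.
rewrite (linD (linop Meta n)) (linZ (linop Meta n)) !scaleN1r.
by rewrite scalerDr scalerN scalerA opprD addrA.
Qed.

Lemma TTbe m n v : bt m (et n v) = - et n (bt m v).
Proof.
rewrite [et n v]/etatilde (linD (lin_bt m)) (linZ (lin_bt m)) bt_eta (@TPb Mc) //.
rewrite (@TPb Mgamma) //= !scale0r !addr0 scale1r !scaleN1r alg4 /etatilde.
rewrite -mulrDl -intrD /kdelta.
case: ifP => [/eqP H|_]; last by rewrite !mulr0 scale0r addr0.
by rewrite H mulr1 scale0r addr0.
Qed.

Lemma TTee m n v : et m (et n v) = - et n (et m v).
Proof.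
rewrite [et n v]/etatilde (linD (lin_et m)) (linZ (lin_et m)) (@TPe Meta) // (@TPe Mc) //.
rewrite (@TPe Mgamma) //= !scale0r !addr0 scale1r !scaleN1r scalerN -opprD.
by [].
Qed.

End Modes.


Section P2.
Variables (C : numClosedFieldType) (V : lmodType C) (M : mode_rep V).
Local Notation op := (op M).
Local Notation bv := (bracket_val C).
Local Notation X := (Xop M).
Local Notation nz := nonzero_ints.
Local Notation bt := (btilde M).
Local Notation et := (etatilde M).
Local Notation sg := (sg C).


Lemma PP k l m n v : op k m (op l n v) - sg k l *: op l n (op k m v) = bv k l m n *: v.
Proof. by rewrite swap addrAC subrr add0r. Qed.

Lemma part2 k l m n : m != 0 -> n != 0 ->
  gbracket k l (optilde M k m) (optilde M l n) = (fun v => bv k l m n *: v).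
Proof.
move=> m0 n0; apply/funext => v; rewrite gbE.
have k0 : kdelta C m 0 = 0 by rewrite kd0 // addr0.
have k0' : kdelta C 0 n = 0 by rewrite kd0 // add0r.
have Tb l' : bv Mgamma l' 0 n = 0 -> bv Mzeta l' m n = 0 ->
   bt m (op l' n v) - sg Mb l' *: op l' n (bt m v) = bv Mb l' m n *: v.
  by move=> H1 H2; rewrite TPb // addrAC subrr add0r.
have Te l' : bv Mgamma l' 0 n = 0 -> bv Mc l' m n = 0 ->
   et m (op l' n v) - sg Meta l' *: op l' n (et m v) = bv Meta l' m n *: v.
  by move=> H1 H2; rewrite TPe // addrAC subrr add0r.
have Pb k' : bv k' Mgamma m 0 = 0 -> bv k' Mzeta m n = 0 ->
   op k' m (bt n v) - sg k' Mb *: bt n (op k' m v) = bv k' Mb m n *: v.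
  by move=> H1 H2; rewrite PTb // addrAC subrr add0r.
have Pe k' : bv k' Mgamma m 0 = 0 -> bv k' Mc m n = 0 ->
   op k' m (et n v) - sg k' Meta *: et n (op k' m v) = bv k' Meta m n *: v.
  by move=> H1 H2; rewrite PTe // addrAC subrr add0r.
case: k => /=.
all: case: l => /=; try exact: PP.
all: try (apply: Tb => //=; rewrite ?k0'; done).
all: try (apply: Te => //=; rewrite ?k0'; done).
all: try (apply: Pb => //=; rewrite ?k0 ?oppr0; done).
all: try (apply: Pe => //=; rewrite ?k0 ?oppr0; done).
- by rewrite TTbb scaleN1r opprK addNr scale0r.
- by rewrite TTbe scaleN1r opprK addNr scale0r.
- by rewrite (TTbe M n m) scaleN1r opprK addrC addNr scale0r.
- by rewrite TTee scaleN1r opprK addNr scale0r.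
Qed.


Lemma part1 : comm (Pop M) X = (fun v => v).
Proof.
apply/funext => v; have := cX M Mgamma 0 v; rewrite /comm /Pop /= => ->.
by rewrite /kdelta addr0 eqxx scale1r.
Qed.

End P2.


Section P3.
Variables (C : numClosedFieldType) (V : lmodType C) (M : mode_rep V).
Local Notation op := (op M).
Local Notation bv := (bracket_val C).
Local Notation X := (Xop M).
Local Notation nz := nonzero_ints.
Local Notation bt := (btilde M).
Local Notation et := (etatilde M).
Local Notation sg := (sg C).

Lemma linP : lin (Pop M).
Proof. exact: linop. Qed.

Lemma p3b n w : comm (bt n) X w = 0.
Proof.
rewrite /btilde comm_add; last exact: linX.
rewrite comm_scale; last exact: linX.
rewrite (comm_o (f:=op Mzeta n) (op Mgamma 0)); last exact: linop.
rewrite !cX /cXv.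
by rewrite /kdelta !addr0 eqxx scale1r scaleNr addNr.
Qed.

Lemma p3e n w : comm (et n) X w = 0.
Proof.
rewrite /etatilde comm_add; last exact: linX.
rewrite comm_scale; last exact: linX.
rewrite (comm_o (f:=op Mc n) (op Mgamma 0)); last exact: linop.
rewrite !cX /cXv.
by rewrite /kdelta !addr0 eqxx scale1r scaleNr addNr.
Qed.

Lemma p3bP n w : comm (bt n) (Pop M) w = 0.
Proof.
rewrite /btilde comm_add; last exact: linP.
rewrite comm_scale; last exact: linP.
rewrite (comm_o (f:=op Mzeta n) (op Mgamma 0)); last exact: linop.
by rewrite !cP /= !scale0r linear0 ?addr0 ?add0r ?scaler0 ?addr0.
Qed.

Lemma p3eP n w : comm (et n) (Pop M) w = 0.
Proof.
rewrite /etatilde comm_add; last exact: linP.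
rewrite comm_scale; last exact: linP.
rewrite (comm_o (f:=op Mc n) (op Mgamma 0)); last exact: linop.
by rewrite !cP /= !scale0r linear0 ?addr0 ?add0r ?scaler0 ?addr0.
Qed.

Lemma part3 k n : n != 0 ->
  comm (optilde M k n) X = (fun _ => 0) /\ comm (optilde M k n) (Pop M) = (fun _ => 0).
Proof.
move=> n0; have kn : kdelta C n 0 = 0 by rewrite kd0 // addr0.
split; apply/funext => w; case: k.
all: try exact: p3b.
all: try exact: p3e.
all: try exact: p3bP.
all: try exact: p3eP.
all: rewrite /optilde ?cX ?cP /cXv /= ?kn ?oppr0 ?scale0r //.
Qed.

End P3.


Section P4.
Variables (C : numClosedFieldType) (V : lmodType C) (M : mode_rep V).
Local Notation op := (op M).
Local Notation bv := (bracket_val C).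
Local Notation X := (Xop M).
Local Notation nz := nonzero_ints.
Local Notation bt := (btilde M).
Local Notation et := (etatilde M).
Local Notation sg := (sg C).

Local Notation Lm := (Lmatt M).
Local Notation Lg := (Lgrav M).
Local Notation Lz := (Lzeta' M).

Lemma kdn m n : n != 0 -> kdelta C m (n - m) = 0.
Proof. by move=> n0; rewrite kd0 // addrC subrK. Qed.

Lemma bnd_scal A (f : int -> V) (a : int -> C) : bnd A f -> bnd A (fun i => a i *: f i).
Proof. by move=> [K HK]; exists K => i Ai Hi; rewrite HK // scaler0. Qed.

Lemma bnd_pair k1 k2 A n v : (forall m, bv k1 k2 m (n - m) = 0) ->
  bnd A (fun m => op k1 m (op k2 (n - m) v)).
Proof.
move=> Hb; have [K HK] := pe M v; exists (K + absz n)%N => m _ /orP[Hm|Hm].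
  by rewrite kill // HK //; lia.
by rewrite (HK k2 (n - m)) ?linear0 //; lia.
Qed.

Lemma bLm n u : n != 0 -> bnd setT (fun m => op MX m (op MX (n - m) u)).
Proof. by move=> n0; apply: bnd_pair => m /=; rewrite kdn ?mulr0. Qed.

Lemma bLg n u : n != 0 -> bnd setT (fun m => (- m%:~R) *: op Mbeta m (op Mgamma (n - m) u)
   + 2^-1 *: op MPhi m (op MPhi (n - m) u)).
Proof.
move=> n0; apply: bndD.
  by apply: (bnd_scal (fun m => - m%:~R)); apply: bnd_pair => m /=; rewrite kdn ?oppr0.
by apply: (bnd_scal (fun m => 2^-1)); apply: bnd_pair => m /=; rewrite kdn ?mulr0.
Qed.

Lemma bLz n u : n != 0 -> bnd [set m : int | m != n] (fun m => m%:~R *: op Mzeta m (op Meta (n - m) u)).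
Proof.
move=> n0; apply: (bnd_scal (fun m => m%:~R)); apply: bnd_pair => m /=; by rewrite kdn.
Qed.

Lemma Lvan (n : int) u (K : nat) : (forall k n, K%:Z < n -> op k n u = 0) -> (K + K)%:Z < n ->
  [/\ Lm n u = 0, Lg n u = 0 & Lz n u = 0].
Proof.
move=> HK Hn; have n0 : n != 0 by lia.
have H k1 k2 m : (forall m, bv k1 k2 m (n - m) = 0) -> op k1 m (op k2 (n - m) u) = 0.
  move=> Hb; case: (ltrP K%:Z m) => Hm; first by rewrite kill // HK.
  by rewrite (HK k2 (n - m)) ?linear0 //; lia.
split.
- rewrite /Lmatt fsum0 ?scaler0 // => m _; apply: H => m' /=; by rewrite kdn ?mulr0.
- rewrite /Lgrav fsum0 ?(HK MPhi n) ?scaler0 ?addr0 //; first lia.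
  move=> m _; rewrite !H ?scaler0 ?addr0 // => m' /=; by rewrite kdn ?mulr0 ?oppr0.
- rewrite /Lzeta' fsum0 ?oppr0 // => m _; by rewrite H ?scaler0 // => m' /=; rewrite kdn.
Qed.

Lemma Lpush (n : int) u : n != 0 -> op Mc (- n) u = 0 ->
  [/\ op Mc (-n) (Lm n u) = 0, op Mc (-n) (Lg n u) = 0 & op Mc (-n) (Lz n u) = 0].
Proof.
move=> n0 Hc; split.
- rewrite /Lmatt (linZ (linop M Mc (-n))) (fs_lin (linop M Mc (-n)) (bLm u n0)) fsum0 ?scaler0 //.
  by move=> m _; rewrite kill2.
- rewrite /Lgrav (linD (linop M Mc (-n))) (linZ (linop M Mc (-n))) (fs_lin (linop M Mc (-n)) (bLg u n0)).
  rewrite fsum0 ?(kill (k:=Mc)) ?scaler0 ?addr0 //.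
  by move=> m _; rewrite (linD (linop M Mc (-n))) !(linZ (linop M Mc (-n))) !kill2 ?scaler0 ?addr0.
- rewrite /Lzeta' (linN (linop M Mc (-n))) (fs_lin (linop M Mc (-n)) (bLz u n0)) fsum0 ?oppr0 //.
  by move=> m _; rewrite (linZ (linop M Mc (-n))) kill2 ?scaler0.
Qed.

Lemma bS1 u : bnd nz (fun n => op Mc (- n) (Lm n u + Lg n u + Lz n u)).
Proof.
have [K HK] := pe M u; exists (K + K)%N => n n0 /orP[Hn|Hn].
  by have [-> -> ->] := Lvan HK Hn; rewrite !addr0 linear0.
have [h1 h2 h3] := Lpush n0 (HK Mc (-n) (ltac:(lia))).
by rewrite /= (linD (linop M Mc (-n)) (Lm n u + Lg n u) (Lz n u)) (linD (linop M Mc (-n)) (Lm n u) (Lg n u)) h1 h2 h3 !addr0.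
Qed.

Lemma bS2 u : bnd nz (fun n => op Meta (- n) (op Mbeta n u)).
Proof.
have [K HK] := pe M u; exists K => n n0 /orP[Hn|Hn] /=.
  by rewrite (HK Mbeta n) ?linear0.
by rewrite kill // HK //; lia.
Qed.

Definition Am (m : int) := [set n : int | (n != 0) && (m + n != 0)].

Lemma bS3i (m : int) u : m != 0 ->
  bnd (Am m) (fun n => (m - n)%:~R *: op Mc (- m) (op Mc (- n) (op Mb (n + m) u))).
Proof.
move=> m0; have [K HK] := pe M u; exists (K + absz m)%N => n n0 /orP[Hn|Hn] /=.
  by rewrite (HK Mb (n + m)) ?linear0 ?scaler0 //; lia.
rewrite (@kill _ _ M Mc Mb) ?linear0 ?scaler0 //; last by apply: HK; lia.
by rewrite /= kd0 //; apply/negP => /eqP H; move: m0; rewrite -H; lia.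
Qed.

Lemma bS3 u : bnd nz (fun m => \sum_(n \in Am m) (m - n)%:~R *: op Mc (- m) (op Mc (- n) (op Mb (n + m) u))).
Proof.
have [K HK] := pe M u; exists (K + K)%N => m m0 /orP[Hm|Hm] /=.
  apply: fsum0 => n /andP[n0 mn0].
  case: (ltrP K%:Z (n + m)) => H; first by rewrite (HK Mb (n + m)) ?linear0 ?scaler0.
  rewrite (@kill _ _ M Mc Mb) ?linear0 ?scaler0 //; last by apply: HK; lia.
  by rewrite /= kd0 //; apply/negP => /eqP H'; move: m0; rewrite /nonzero_ints /=; lia.
apply: fsum0 => n /andP[n0 mn0].
rewrite kill2 ?scaler0 //; last by apply: HK; lia.
by rewrite /= kd0 //; apply/negP => /eqP H'; move: n0; lia.
Qed.

End P4.


Section P5.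
Variables (C : numClosedFieldType) (V : lmodType C) (M : mode_rep V).
Local Notation op := (op M).
Local Notation bv := (bracket_val C).
Local Notation X := (Xop M).
Local Notation nz := nonzero_ints.
Local Notation bt := (btilde M).
Local Notation et := (etatilde M).
Local Notation sg := (sg C).

Local Notation Lm := (Lmatt M).
Local Notation Lg := (Lgrav M).
Local Notation Lz := (Lzeta' M).

Lemma cLm_X (n : int) w : n != 0 -> comm (Lm n) X w = 0.
Proof.
move=> n0; rewrite /Lmatt comm_scale ?comm_sum; [|exact: linX|by move=> u; apply: bLm|exact: linX].
rewrite fsum0 ?scaler0 // => m _.
by rewrite (comm_o (f:=op MX m) (op MX (n - m))) ?cX /= ?linear0 ?addr0 //; exact: linop.
Qed.

Ltac sd := try exact: linX; try exact: linP; try exact: linop.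

Lemma comm_add3 (f g h G : V -> V) w : lin G ->
  comm (fun v => f v + g v + h v) G w = comm f G w + comm g G w + comm h G w.
Proof. by move=> HG; rewrite comm_add // comm_add. Qed.

Lemma tLg (n m : int) w : comm (fun v => (- m%:~R) *: op Mbeta m (op Mgamma (n - m) v)
   + 2^-1 *: op MPhi m (op MPhi (n - m) v)) X w = (- m%:~R) *: op Mbeta m (kdelta C (n - m) 0 *: w).
Proof.
rewrite comm_add; sd; rewrite !comm_scale; sd.
rewrite (comm_o (f:=op Mbeta m) (op Mgamma (n-m))); sd.
rewrite (comm_o (f:=op MPhi m) (op MPhi (n-m))); sd.
by rewrite !cX /= !addr0 linear0 scaler0 addr0.
Qed.

Lemma cLg_X (n : int) w : n != 0 -> comm (Lg n) X w = (- n%:~R) *: op Mbeta n w.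
Proof.
move=> n0; rewrite /Lgrav comm_add; sd.
rewrite comm_sum; [|exact: linX|by move=> u; apply: bLg].
rewrite comm_scale ?cX /= ?scaler0 ?addr0; sd.
under eq_fsbigr => m _ do rewrite tLg.
rewrite (fs_single (a:=n)) // ?subrr /kdelta ?addr0 ?eqxx ?scale1r //.
move=> m _ mn; rewrite ifF ?scale0r ?linear0 ?scaler0 //.
by apply/negbTE; rewrite addr0 subr_eq0 eq_sym.
Qed.

Lemma tLz (n m : int) w : comm (fun v => m%:~R *: op Mzeta m (op Meta (n - m) v)) X w
  = m%:~R *: op Mzeta m (- (n - m)%:~R *: op Mc (n - m) w).
Proof.
rewrite comm_scale; sd; rewrite (comm_o (f:=op Mzeta m) (op Meta (n-m))); sd.
by rewrite !cX /= addr0.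
Qed.

Lemma cLz_X (n : int) w : n != 0 -> comm (Lz n) X w =
  - \sum_(m \in [set m : int | m != n]) m%:~R *: op Mzeta m (- (n - m)%:~R *: op Mc (n - m) w).
Proof.
move=> n0; rewrite /Lzeta' comm_opp; sd.
rewrite comm_sum; [|exact: linX|by move=> u; apply: bLz].
by under eq_fsbigr => m _ do rewrite tLz.
Qed.

Definition S1 v := \sum_(n \in nz) op Mc (- n) (Lm n v + Lg n v + Lz n v).
Definition S2 v := \sum_(n \in nz) op Meta (- n) (op Mbeta n v).
Definition S3 v := \sum_(m \in nz) \sum_(n \in Am m) (m - n)%:~R *: op Mc (- m) (op Mc (- n) (op Mb (n + m) v)).

Lemma dhatE v : dhat M v = S1 v + S2 v - 2^-1 *: S3 v.
Proof. by []. Qed.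

Lemma cS1_X w : comm S1 X w = \sum_(n \in nz) op Mc (- n) ((- n%:~R) *: op Mbeta n w
  - \sum_(m \in [set m : int | m != n]) m%:~R *: op Mzeta m (- (n - m)%:~R *: op Mc (n - m) w)).
Proof.
rewrite /S1 comm_sum; [|exact: linX|exact: bS1].
apply: eq_fsbigr => n /[!inE] n0.
rewrite (comm_o (f:=op Mc (-n)) (fun v => Lm n v + Lg n v + Lz n v)); sd.
rewrite cX /= addr0.
rewrite (comm_add3 (Lm n) (Lg n) (Lz n)); sd.
by rewrite cLm_X // cLg_X // cLz_X // add0r.
Qed.

Lemma cS2_X w : comm S2 X w = \sum_(n \in nz) n%:~R *: op Mc (- n) (op Mbeta n w).
Proof.
rewrite /S2 comm_sum; [|exact: linX|exact: bS2].
apply: eq_fsbigr => n _.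
rewrite (comm_o (f:=op Meta (-n)) (op Mbeta n)); sd.
by rewrite !cX /= linear0 add0r rmorphN opprK.
Qed.

Lemma cS3_X w : comm S3 X w = \sum_(m \in nz) \sum_(n \in Am m)
   (m - n)%:~R *: op Mc (- m) (op Mc (- n) (- (n + m)%:~R *: op Mzeta (n + m) w)).
Proof.
rewrite /S3 comm_sum; [|exact: linX|exact: bS3].
apply: eq_fsbigr => m /[!inE] m0.
rewrite comm_sum; [|exact: linX|by move=> u; apply: bS3i].
apply: eq_fsbigr => n _.
rewrite comm_scale; sd.
rewrite (comm_o (f:=op Mc (-m)) (fun v => op Mc (-n) (op Mb (n + m) v))); sd.
rewrite (comm_o (f:=op Mc (-n)) (op Mb (n + m))); sd.
by rewrite !cX /= !addr0.
Qed.

Lemma cD G w : lin G -> comm (dhat M) G w = comm S1 G w + comm S2 G w - 2^-1 *: comm S3 G w.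
Proof.
move=> HG; change (comm (fun v => (S1 v + S2 v) + - (2^-1 *: S3 v)) G w = 
  comm S1 G w + comm S2 G w - 2^-1 *: comm S3 G w).
by rewrite comm_add // comm_opp // comm_scale // comm_add.
Qed.

Local Notation P := (Pop M).

Lemma cLm_P (n : int) w : n != 0 -> comm (Lm n) P w = 0.
Proof.
move=> n0; rewrite /Lmatt comm_scale ?comm_sum; [|exact: linP|by move=> u; apply: bLm|exact: linP].
rewrite fsum0 ?scaler0 // => m _.
by rewrite (comm_o (f:=op MX m) (op MX (n - m))) ?cP /= ?scale0r ?linear0 ?addr0 //; exact: linop.
Qed.

Lemma cLg_P (n : int) w : n != 0 -> comm (Lg n) P w = 0.
Proof.
move=> n0; rewrite /Lgrav comm_add; sd.
rewrite comm_sum; [|exact: linP|by move=> u; apply: bLg].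
rewrite comm_scale ?cP /= ?scale0r ?scaler0 ?addr0; sd.
apply: fsum0 => m _.
rewrite comm_add; sd; rewrite !comm_scale; sd.
rewrite (comm_o (f:=op Mbeta m) (op Mgamma (n-m))); sd.
rewrite (comm_o (f:=op MPhi m) (op MPhi (n-m))); sd.
rewrite !cP /= !scale0r !linear0 !addr0 scaler0 addr0.
have [->|m0] := eqVneq m 0; first by rewrite oppr0 scale0r.
by rewrite kd0 ?addr0 // oppr0 scale0r add0r scaler0.
Qed.

Lemma cLz_P (n : int) w : n != 0 -> comm (Lz n) P w = 0.
Proof.
move=> n0; rewrite /Lzeta' comm_opp; sd.
rewrite comm_sum; [|exact: linP|by move=> u; apply: bLz].
rewrite fsum0 ?oppr0 // => m _.
rewrite comm_scale; sd; rewrite (comm_o (f:=op Mzeta m) (op Meta (n-m))); sd.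
by rewrite !cP /= !scale0r linear0 addr0 scaler0.
Qed.

Lemma partP w : comm (dhat M) P w = 0.
Proof.
rewrite cD; sd.
rewrite /S1 /S2 /S3 !comm_sum; sd; try exact: bS1; try exact: bS2; try exact: bS3.
rewrite fsum0; last first.
  move=> n n0.
  rewrite (comm_o (f:=op Mc (-n)) (fun v => Lm n v + Lg n v + Lz n v)); sd.
  rewrite cP /= scale0r addr0 (comm_add3 (Lm n) (Lg n) (Lz n)); sd.
  by rewrite cLm_P // cLg_P // cLz_P // !addr0 linear0.
rewrite fsum0; last first.
  move=> n n0.
  rewrite (comm_o (f:=op Meta (-n)) (op Mbeta n)); sd.
  by rewrite !cP /= scale0r addr0 kd0 ?addr0 // oppr0 scale0r linear0.
rewrite fsum0 ?scaler0 ?subr0 ?addr0 //.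
move=> m m0.
rewrite comm_sum; [|exact: linP|by move=> u; apply: bS3i].
apply: fsum0 => n _.
rewrite comm_scale; sd.
rewrite (comm_o (f:=op Mc (-m)) (fun v => op Mc (-n) (op Mb (n + m) v))); sd.
rewrite (comm_o (f:=op Mc (-n)) (op Mb (n + m))); sd.
by rewrite !cP /= !scale0r !linear0 !addr0 linear0 scaler0.
Qed.

End P5.


Section P6.
Variables (C : numClosedFieldType) (V : lmodType C) (M : mode_rep V).
Local Notation op := (op M).
Local Notation bv := (bracket_val C).
Local Notation X := (Xop M).
Local Notation nz := nonzero_ints.
Local Notation bt := (btilde M).
Local Notation et := (etatilde M).
Local Notation sg := (sg C).

Local Notation Lm := (Lmatt M).
Local Notation Lg := (Lgrav M).
Local Notation Lz := (Lzeta' M).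

Local Notation P := (Pop M).

Definition Zt w (n k : int) := op Mc (- n) (op Mc (- k) (op Mzeta (n + k) w)).

Lemma shift_bij (n : int) : set_bij nz [set m : int | m != n] (fun k => n + k).
Proof.
split.
- by move=> k; rewrite /nonzero_ints /= => k0; lia.
- by move=> x y _ _ /= /addrI.
- move=> m /= mn; exists (m - n); first by rewrite /nonzero_ints /=; lia.
  by rewrite addrCA subrr addr0.
Qed.

Lemma A1 (n : int) w :
  op Mc (- n) ((- n%:~R) *: op Mbeta n w
    - \sum_(m \in [set m : int | m != n]) m%:~R *: op Mzeta m (- (n - m)%:~R *: op Mc (n - m) w))
  = (- n%:~R) *: op Mc (- n) (op Mbeta n w) + \sum_(k \in nz) ((n + k) * k)%:~R *: Zt w n k.
Proof.
rewrite (linB (linop M Mc (-n))) (linZ (linop M Mc (-n))); congr (_ + _).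
under eq_fsbigr => m _ do rewrite (linZ (linop M Mzeta m)) scalerA.
have hb : bnd [set m : int | m != n] (fun m => (m%:~R * - (n - m)%:~R) *: op Mzeta m (op Mc (n - m) w)).
  by apply: (bnd_scal (fun m => m%:~R * - (n - m)%:~R)); apply: bnd_pair.
rewrite (fs_lin (linop M Mc (-n)) hb) -fsumN; last first.
  by case: hb => K HK; exists K; apply: bndK_lin => //; exact: linop.
rewrite (reindex_fsbig (fun k => n + k) _ _ _ (shift_bij n)).
apply: eq_fsbigr => k _.
have e : n - (n + k) = - k by rewrite opprD addNKr.
rewrite e (linZ (linop M Mc (-n))) (swap M Mzeta Mc) /= scale0r addr0 (linZ (linop M Mc (-n))).
rewrite /Zt /sg /= scaleN1r scalerN opprK; congr (_ *: _).
by rewrite intrM rmorphN opprK.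
Qed.

Lemma A3 (m : int) w : m != 0 ->
  \sum_(n \in Am m) (m - n)%:~R *: op Mc (- m) (op Mc (- n) (- (n + m)%:~R *: op Mzeta (n + m) w))
  = \sum_(k \in nz) ((m - k) * - (m + k))%:~R *: Zt w m k.
Proof.
move=> m0; rewrite (fsbig_widen (Am m) nz).
- apply: eq_fsbigr => k _; rewrite (linZ (linop M Mc (-k))) (linZ (linop M Mc (-m))) scalerA.
  by rewrite [k + m]addrC /Zt intrM rmorphN.
- by move=> k; rewrite /Am /= => /andP[].
move=> k [k0 nA]; rewrite /preimage /=.
have mk : k + m = 0.
  case: (eqVneq (k + m) 0) => // H; exfalso; apply: nA; rewrite /Am /=; apply/andP; split => //; by rewrite addrC.
by rewrite mk oppr0 scale0r !linear0 ?scaler0.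
Qed.

Lemma antisym (r : seq int) (Pr : pred int) (s : int -> int -> C) (Z : int -> int -> V) :
  (forall n k, s n k = s k n) -> (forall n k, Z n k = - Z k n) ->
  \sum_(n <- r | Pr n) \sum_(k <- r | Pr k) s n k *: Z n k = 0.
Proof.
move=> hs hZ.
have HD : \sum_(n <- r | Pr n) \sum_(k <- r | Pr k) s n k *: Z n k =
   - \sum_(n <- r | Pr n) \sum_(k <- r | Pr k) s n k *: Z n k.
  rewrite [LHS]exchange_big /= -sumrN; apply: eq_bigr => k _; rewrite -sumrN; apply: eq_bigr => n _.
  by rewrite hZ hs scalerN.
move: HD; set D := \sum_(n <- r | Pr n) _ => HD.
have : (2%:R : C) *: D = 0 by rewrite scaler_nat mulr2n {1}HD addNr.
by move/eqP; rewrite scaler_eq0 pnatr_eq0 /= => /eqP.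
Qed.

Lemma Zanti w n k : Zt w n k = - Zt w k n.
Proof. by rewrite /Zt (swap M Mc Mc) /= scale0r addr0 scaleN1r addrC. Qed.

Lemma finalX w :
  \sum_(n \in nz) ((- n%:~R) *: op Mc (- n) (op Mbeta n w) + \sum_(k \in nz) ((n + k) * k)%:~R *: Zt w n k)
  + \sum_(n \in nz) n%:~R *: op Mc (- n) (op Mbeta n w)
  - 2^-1 *: \sum_(m \in nz) \sum_(k \in nz) ((m - k) * - (m + k))%:~R *: Zt w m k = 0.
Proof.
have [K HK] := pe M w; set W := (K + K)%N.
have Zv n k : (W%:Z < n) || (n < - W%:Z) || (W%:Z < k) || (k < - W%:Z) -> Zt w n k = 0.
  move=> H; case: (ltrP n (- K%:Z)) => Hn.
    by rewrite /Zt kill2 //; apply: HK; lia.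
  case: (ltrP k (- K%:Z)) => Hk.
    by rewrite /Zt (@kill _ _ M Mc Mzeta) ?linear0 //; apply: HK; lia.
  by rewrite /Zt (HK Mzeta (n + k)) ?linear0 //; lia.
have cb n : (W%:Z < n) || (n < - W%:Z) -> op Mc (- n) (op Mbeta n w) = 0.
  move=> H; case: (ltrP K%:Z n) => Hn; first by rewrite (HK Mbeta n) ?linear0.
  by rewrite kill //; apply: HK; lia.
have bi n (s : int -> int -> int) : bndK nz (fun k => (s n k)%:~R *: Zt w n k) W.
  by move=> k _ Hk; rewrite Zv ?scaler0 //; case/orP: Hk => ->; rewrite ?orbT.
under eq_fsbigr => n _ do rewrite (fs_win (bi n (fun n k => (n + k) * k))).
under [X in _ - 2^-1 *: X]eq_fsbigr => n _ do rewrite (fs_win (bi n (fun n k => (n - k) * - (n + k)))).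
rewrite (fs_win (K:=W)); last first.
  move=> n _ Hn /=; rewrite cb // scaler0 add0r big1 // => k _.
  by rewrite Zv ?scaler0 // Hn.
rewrite (fs_win (K:=W)); last first.
  by move=> n _ Hn /=; rewrite cb // scaler0.
rewrite (fs_win (K:=W)); last first.
  move=> n _ Hn /=; rewrite big1 // => k _.
  by rewrite Zv ?scaler0 // Hn.
rewrite [X in X + _ - _]big_split /= [X in X - _]addrAC -big_split /= big1 ?add0r; last by move=> n _; rewrite scaleNr addNr.
rewrite scaler_sumr -sumrB.
under eq_bigr => n _ do rewrite scaler_sumr -sumrB.
under eq_bigr => n _ do under eq_bigr => k _ do rewrite scalerA -scalerBl.
apply: antisym; last exact: Zanti.
move=> n k; rewrite !(intrM, intrD, intrN, intrB).
field.
by [].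
Qed.

Lemma partX w : comm (dhat M) X w = 0.
Proof.
rewrite cD; last exact: linX.
rewrite cS1_X cS2_X cS3_X.
under eq_fsbigr => n _ do rewrite A1.
under [X in _ - 2^-1 *: X]eq_fsbigr => m /[!inE] m0 do rewrite A3 //.
exact: finalX.
Qed.

Theorem mainTheorem2' :
  comm (Pop M) (Xop M) = (fun v => v)
  /\ (forall (k l : mode) (m n : int), m != 0 -> n != 0 ->
        gbracket k l (optilde M k m) (optilde M l n)
        = (fun v => bracket_val C k l m n *: v))
  /\ (forall (k : mode) (n : int), n != 0 ->
        comm (optilde M k n) (Xop M) = (fun _ => 0)
        /\ comm (optilde M k n) (Pop M) = (fun _ => 0))
  /\ comm (dhat M) (Xop M) = (fun _ => 0)
  /\ comm (dhat M) (Pop M) = (fun _ => 0).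
Proof.
split; first exact: part1.
split; first by move=> k l m n; apply: part2.
split; first by move=> k n; apply: part3.
split; apply/funext => w; [exact: partX | exact: partP].
Qed.

End P6.

Local Close Scope classical_set_scope.

Theorem mainTheorem2 (C : numClosedFieldType) (V : lmodType C) (M : mode_rep V) :
  (* [P, X] = 1, i.e. gamma_0 beta_0 - beta_0 gamma_0 = 1 *)
  comm (Pop M) (Xop M) = (fun v => v)
  (* the tilded oscillators (nonzero index) satisfy the same relations *)
  /\ (forall (k l : mode) (m n : int), m != 0 -> n != 0 ->
        gbracket k l (optilde M k m) (optilde M l n)
        = (fun v => bracket_val C k l m n *: v))
  (* they commute with X and P *)
  /\ (forall (k : mode) (n : int), n != 0 ->
        comm (optilde M k n) (Xop M) = (fun _ => 0)
        /\ comm (optilde M k n) (Pop M) = (fun _ => 0))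
  (* dhat commutes with X and P *)
  /\ comm (dhat M) (Xop M) = (fun _ => 0)
  /\ comm (dhat M) (Pop M) = (fun _ => 0).
Proof. exact: mainTheorem2'. Qed.
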